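(* Fix a constant $c > 0$ and consider RLS-GP with $F = \{\mathrm{AND}, \mathrm{OR}\}$, $L = \{x_1, \ldots, x_n\}$, tree size limit $\ell \ge n$, target $h \in \{\mathrm{AND}_n, \mathrm{OR}_n\}$, using in each iteration a fresh training set of $s = n^c \lg^2 n$ inputs sampled uniformly at random from $\{0,1\}^n$, and terminating when the sampled error of its current solution is at most $c' \lg n$, where $c'$ is an appropriately large constant. Then with probability at least $1 - O(\log^2(n)/n)$, during the first $O(\log n)$ iterations and while the expected sampled error ($s$ times the generalisation error) of its current solution remains above $(c'/4)\lg n$, RLS-GP does not accept any mutation which (1) inserts a copy of a variable already present in the current solution, (2) inserts an undesired function node (an OR node when $h = \mathrm{AND}_n$, an AND node when $h = \mathrm{OR}_n$), or (3) increases the generalisation error of the current solution.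
   Context: Programs are finite rooted binary trees (the empty tree is allowed) whose internal nodes are labelled by binary Boolean functions from $F$ and whose leaves are labelled by literals from $L$; a program computes a Boolean function of $(x_1,\dots,x_n)$ in the obvious way. $\mathrm{AND}_n(x) = x_1 \wedge \dots \wedge x_n$, $\mathrm{OR}_n(x) = x_1 \vee \dots \vee x_n$. The generalisation error of $X$ is $|\{x \in \{0,1\}^n : X(x) \ne h(x)\}|/2^n$. In each iteration a fresh training set of $s$ inputs is drawn independently and uniformly at random from $\{0,1\}^n$; the sampled error $f(X)$ of a program $X$ in that iteration is the number of sampled inputs on which $X$ differs from $h$; parent and offspring are evaluated on the same training set. LeafCount$(X)$ is the number of leaves. HVL-Prime with subtree deletion, applied to a tree $X$: choose $op \in \{\mathrm{INS}, \mathrm{DEL}, \mathrm{SUB}\}$, a literal $l \in L$ and a function $g \in F$, independently and uniformly at random. If $X$ is empty, the result is the single leaf $l$. Otherwise: if $op = \mathrm{INS}$, choose a node $x$ of $X$ uniformly at random and replace it by a new node labelled $g$ whose two children are the subtree rooted at $x$ and a new leaf $l$, in uniformly random order; if $op = \mathrm{DEL}$, choose a node $x$ of $X$ (leaf or internal) uniformly at random and replace the parent of $x$ by the sibling of $x$; if $op = \mathrm{SUB}$, choose a leaf of $X$ uniformly at random and replace it by $l$. RLS-GP with tree size limit $\ell$: start with the empty tree $X$; in each iteration let $X' := $ HVL-Prime$(X)$, and if LeafCount$(X') \le \ell$ and $f(X') \le f(X)$ then set $X := X'$. $\lg$ is the base-2 logarithm; asymptotics are as $n \to \infty$. *)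

(* Defs.v *)
From HB Require Import structures.
From mathcomp Require Import all_boot all_order all_algebra.
From mathcomp Require Import reals exp.
Set Implicit Arguments. Unset Strict Implicit. Unset Printing Implicit Defensive.
Import Order.TTheory GRing.Theory Num.Theory.
Local Open Scope ring_scope.

Inductive fn := AND | OR.

(* Non-empty programs over literals L = {x_1, ..., x_n} (x_{i+1} is Leaf i). *)
Inductive tree (n : nat) : Type :=
| Leaf of 'I_n
| Node of fn & tree n & tree n.
Arguments Leaf {n}.
Arguments Node {n}.

(* A program is a possibly empty tree: None = the empty tree. *)
Definition program (n : nat) := option (tree n).

Definition input (n : nat) := {ffun 'I_n -> bool}.

Section Trees.
Variable n : nat.

Fixpoint tsize (t : tree n) : nat :=
  match t with Leaf _ => 1 | Node _ a b => (tsize a + tsize b).+1 end.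

Fixpoint nleaves (t : tree n) : nat :=
  match t with Leaf _ => 1 | Node _ a b => (nleaves a + nleaves b) end.

Definition LeafCount (X : program n) : nat :=
  if X is Some t then nleaves t else 0.

Fixpoint has_var (i : 'I_n) (t : tree n) : bool :=
  match t with Leaf j => j == i | Node _ a b => has_var i a || has_var i b end.

Fixpoint eval (t : tree n) (x : input n) : bool :=
  match t with
  | Leaf i => x i
  | Node AND a b => eval a x && eval b x
  | Node OR a b => eval a x || eval b x
  end.

Definition target (tgt : fn) (x : input n) : bool :=
  match tgt with
  | AND => [forall i, x i]
  | OR => [exists i, x i]
  end.

Definition undesired (tgt g : fn) : bool :=
  match tgt, g with AND, OR | OR, AND => true | _, _ => false end.

(* Nodes are indexed in preorder, starting with the root at index 0.
   mod_at f t k replaces the subtree rooted at node k by f of it. *)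
Fixpoint mod_at (f : tree n -> tree n) (t : tree n) (k : nat) {struct t} : tree n :=
  if k is k'.+1 then
    match t with
    | Leaf _ => t
    | Node g a b =>
        if (k' < tsize a)%N then Node g (mod_at f a k') b
        else Node g a (mod_at f b (k' - tsize a))
    end
  else f t.

(* del_at t k: replace the parent of node k by the sibling of node k;
   deleting the root (k = 0) yields the empty tree. *)
Fixpoint del_at (t : tree n) (k : nat) {struct t} : program n :=
  if k is k'.+1 then
    match t with
    | Leaf _ => Some t
    | Node g a b =>
        if k' == 0%N then Some b
        else if k' == tsize a then Some a
        else if (k' < tsize a)%N then Some (Node g (odflt a (del_at a k')) b)
        else Some (Node g a (odflt b (del_at b (k' - tsize a))))
    end
  else None.

(* sub_leaf l t j: replace the j-th leaf (left to right, from 0) by l. *)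
Fixpoint sub_leaf (l : 'I_n) (t : tree n) (j : nat) : tree n :=
  match t with
  | Leaf _ => Leaf l
  | Node g a b =>
      if (j < nleaves a)%N then Node g (sub_leaf l a j) b
      else Node g a (sub_leaf l b (j - nleaves a))
  end.

End Trees.

Section Process.
Variable R : realType.

Definition avg (T : finType) (F : T -> R) : R := (\sum_(t : T) F t) / #|T|%:R.

Definition avg_fn (F : fn -> R) : R := (F AND + F OR) / 2.

Variables (n ell : nat) (tgt : fn).

(* Generalisation error; the empty program is taken to be wrong everywhere. *)
Definition gen_err (X : program n) : R :=
  if X is Some t then
    #|[set x : input n | eval t x != target tgt x]|%:R / (2 ^ n)%:R
  else 1.

(* Sampled error on a training set S of s inputs; the empty program is wrong
   on every sampled input. *)
Definition samp_err (s : nat) (S : {ffun 'I_s -> input n}) (X : program n) : nat :=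
  if X is Some t then #|[set i : 'I_s | eval t (S i) != target tgt (S i)]|
  else s.

(* Expectation of F (X', flag) over one application of HVL-Prime (with subtree
   deletion) to X; flag is true iff the mutation is an insertion (op = INS)
   that (1) inserts a variable already present in X or (2) inserts an
   undesired function node. *)
Definition mut_exp (F : program n -> bool -> R) (X : program n) : R :=
  match X with
  | None => avg (fun l : 'I_n => F (Some (Leaf l)) false)
  | Some t =>
      (avg (fun l : 'I_n => avg_fn (fun g =>
         avg (fun k : 'I_(tsize t) => avg (fun b : bool =>
           F (Some (mod_at (fun u => if b then Node g u (Leaf l) else Node g (Leaf l) u) t k))
             (has_var l t || undesired tgt g)))))
     + avg (fun k : 'I_(tsize t) => F (del_at t k) false)
     + avg (fun l : 'I_n => avg (fun j : 'I_(nleaves t) => F (Some (sub_leaf l t j)) false)))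
      / 3
  end.

Definition lg (x : R) : R := ln x / ln 2.

Variables (s : nat) (c' : R).

(* Probability that, within the next T iterations of RLS-GP started from X,
   RLS-GP accepts a mutation of type (1), (2) or (3) in an iteration before
   it terminates and while the expected sampled error s * gen_err of the
   current solution has stayed above (c'/4) lg n. In each iteration a fresh
   training set of s uniform inputs is drawn; RLS-GP terminates if the sampled
   error of the current solution is at most c' lg n; otherwise it mutates and
   accepts X' iff LeafCount X' <= ell and f(X') <= f(X). *)
Fixpoint pbad (T : nat) (X : program n) : R :=
  match T with
  | 0 => 0
  | T'.+1 =>
      if s%:R * gen_err X <= (c' / 4) * lg n%:R then 0 else
      avg (fun S : {ffun 'I_s -> input n} =>
        if (samp_err S X)%:R <= c' * lg n%:R then 0 else
        mut_exp (fun X' flag =>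
          if (LeafCount X' <= ell)%N && (samp_err S X' <= samp_err S X)%N then
            (if flag || (gen_err X < gen_err X') then 1 else pbad T' X')
          else pbad T' X) X)
  end.

End Process.

Definition train_size (R : realType) (c : R) (n : nat) : nat :=
  `|Num.ceil (n%:R `^ c * lg n%:R ^+ 2)|%N.

Arguments pbad {R} n ell tgt s c' T X.

(* Main.v *)
Require Import Defs.
Require Import Defs.
From HB Require Import structures.
From mathcomp Require Import all_boot all_order all_algebra.
From mathcomp Require Import reals exp sequences.
From mathcomp Require Import zify ring lra.
Require Import Defs.
Set Implicit Arguments. Unset Strict Implicit. Unset Printing Implicit Defensive.
Import Order.TTheory GRing.Theory Num.Theory.

Definition fn_eqb (f g : fn) := match f, g with AND, AND | OR, OR => true | _, _ => false end.
Lemma fn_eqP : Equality.axiom fn_eqb.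
Proof. by case; case; constructor. Qed.
HB.instance Definition _ := hasDecEq.Build fn fn_eqP.

Section TreeLemmas.
Variable n : nat.
Implicit Types (t u a c : tree n) (x : input n).

Fixpoint allt (g0 : fn) t : bool :=
  match t with Leaf _ => true | Node g a c => (g == g0) && allt g0 a && allt g0 c end.

Fixpoint dist t : bool :=
  match t with Leaf _ => true
  | Node _ a c => [&& dist a, dist c & [forall i, ~~ (has_var i a && has_var i c)]] end.


Definition opf (g : fn) (p q : bool) := if g is AND then p && q else p || q.
Lemma eval_Node g a c x : eval (Node g a c) x = opf g (eval a x) (eval c x).
Proof. by case: g. Qed.

Lemma has_var_ex t : exists i, has_var i t.
Proof. elim: t => [i|g a [i Hi] c _] /=; first by exists i. by exists i; rewrite Hi. Qed.

Lemma eval_vars_const t x b0 : (forall i, has_var i t -> x i = b0) -> eval t x = b0.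
Proof.
elim: t => [i|g a IHa c IHc] H; first by apply: H; rewrite /= eqxx.
rewrite eval_Node IHa ?IHc; first by clear; case: b0; case: g.
- by move=> i Hi; apply: H; rewrite /= Hi orbT.
- by move=> i Hi; apply: H; rewrite /= Hi.
Qed.

Lemma eval_allt g0 t x : allt g0 t ->
  eval t x = (g0 == AND) <-> (forall i, has_var i t -> x i = (g0 == AND)).
Proof.
move=> Ht; split; last exact: eval_vars_const.
elim: t Ht => [i|g a IHa c IHc]; first by move=> _ /= E j /= /eqP <-.
case/andP => /andP [/eqP -> Ha] Hc; rewrite eval_Node => E i /= /orP [Hi|Hi].
- by apply: IHa => //; move: E; clear; case: g0 => /=; case: (eval a x); case: (eval c x).
- by apply: IHc => //; move: E; clear; case: g0 => /=; case: (eval a x); case: (eval c x).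
Qed.

Section ModAt.
Variable f : tree n -> tree n.

Lemma mod_vars l i t k : (forall u, has_var i (f u) = has_var i u || (i == l)) ->
  (k < tsize t)%N -> has_var i (mod_at f t k) = has_var i t || (i == l).
Proof.
move=> Hf; elim: t k => [j|g a IHa c IHc] [|k] //=.
case: ifP => Hk /=.
  by move=> _; rewrite IHa // -!orbA [has_var i c || _]orbC.
move=> Hlt; rewrite IHc ?orbA //. move: Hk => /negbT; rewrite -leqNgt => Hk. lia.
Qed.

Lemma mod_allt g0 t k : (forall u, allt g0 u -> allt g0 (f u)) -> allt g0 t ->
  allt g0 (mod_at f t k).
Proof.
move=> Hf; elim: t k => [j|g a IHa c IHc] [|k]; try exact: Hf; first by [].
move=> /= /andP [/andP [Hg Ha] Hc]; case: ifP => _ /=.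
  by rewrite Hg IHa.
by rewrite Hg Ha IHc.
Qed.

Lemma mod_dist l t k : (forall u, dist u -> ~~ has_var l u -> dist (f u)) ->
  (forall u i, has_var i (f u) = has_var i u || (i == l)) ->
  ~~ has_var l t -> dist t -> (k < tsize t)%N -> dist (mod_at f t k).
Proof.
move=> Hf Hv; elim: t k => [j|g a IHa c IHc] [|k]; try by move=> H1 H2 _; apply: Hf.
all: try by move=> *.
rewrite /= negb_or => /andP [Nla Nlc] /and3P [Da Dc /forallP Dj] Hk.
case: ifP => Hka /=.
  rewrite IHa // Dc /=; apply/forallP => i; rewrite (mod_vars (Hv^~ i)) //.
  apply/negP => /andP [/orP [Hia|/eqP Eil] Hic].
  - by move: (Dj i); rewrite Hia Hic.
  - by move: Nlc; rewrite -Eil Hic.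
have Hkc : (k - tsize a < tsize c)%N by move/negbT: Hka; rewrite -leqNgt => ?; lia.
rewrite IHc // Da /=; apply/forallP => i; rewrite (mod_vars (Hv^~ i)) //.
apply/negP => /andP [Hia /orP [Hic|/eqP Eil]].
- by move: (Dj i); rewrite Hia Hic.
- by move: Nla; rewrite -Eil Hia.
Qed.

Lemma opf_monol g p q p' b0 : opf g p q = b0 -> (p = b0 -> p' = b0) -> opf g p' q = b0.
Proof. by case: g; case: b0; case: p; case: q; case: p' => //= _ H; rewrite H. Qed.
Lemma opf_monor g p q q' b0 : opf g p q = b0 -> (q = b0 -> q' = b0) -> opf g p q' = b0.
Proof. by case: g; case: b0; case: p; case: q; case: q' => //= _ H; rewrite H. Qed.
Lemma opf_const g b0 : opf g b0 b0 = b0.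
Proof. by case: g; case: b0. Qed.

Lemma mod_mono x b0 t k : (forall u, eval u x = b0 -> eval (f u) x = b0) ->
  eval t x = b0 -> eval (mod_at f t k) x = b0.
Proof.
move=> Hf; elim: t k => [j|g a IHa c IHc] [|k]; try exact: Hf; first by [].
change (mod_at f (Node g a c) k.+1) with (if (k < tsize a)%N then Node g (mod_at f a k) c else Node g a (mod_at f c (k - tsize a))).
case: ifP => _; rewrite !eval_Node => E.
  by apply: opf_monol E _; apply: IHa.
by apply: opf_monor E _; apply: IHc.
Qed.

Lemma ins_sep t k : dist t -> (k < tsize t)%N -> exists w, has_var w t /\
  forall x b0, (forall i, has_var i t -> i != w -> x i = b0) ->
  (forall u, eval (f u) x = b0) -> eval (mod_at f t k) x = b0.
Proof.
elim: t k => [j|g a IHa c IHc] [|k] //=.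
- by move=> _ _; exists j; split => // x b0 _ H; apply: H.
- move=> _ _; have [w Hw] := has_var_ex (Node g a c).
  by exists w; split => // x b0 _ H; apply: H.
move=> /and3P [Da Dc /forallP Dj] Hk; case: ifP => Hka.
  have [w [Hw H]] := IHa _ Da Hka; exists w; rewrite Hw; split => // x b0 Hx Hf.
  rewrite eval_Node (H x b0) //; last by move=> i Hi; apply: Hx; rewrite Hi.
  rewrite (eval_vars_const (b0 := b0)) ?opf_const // => i Hi; apply: Hx; first by rewrite Hi orbT.
  by apply/eqP => Eiw; move: (Dj i); rewrite Hi Eiw Hw.
have Hkc : (k - tsize a < tsize c)%N by move/negbT: Hka; rewrite -leqNgt => ?; lia.
have [w [Hw H]] := IHc _ Dc Hkc; exists w; rewrite Hw orbT; split => // x b0 Hx Hf.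
rewrite eval_Node (H x b0) //; last by move=> i Hi; apply: Hx; rewrite Hi orbT.
rewrite (eval_vars_const (b0 := b0)) ?opf_const // => i Hi; apply: Hx; first by rewrite Hi.
by apply/eqP => Eiw; move: (Dj i); rewrite Hi Eiw Hw.
Qed.
End ModAt.
End TreeLemmas.

Section DelSub.
Variable n : nat.
Implicit Types (t u a c : tree n) (x : input n).

Lemma del_good g0 t k u : allt g0 t -> dist t -> del_at t k = Some u ->
  [/\ allt g0 u, dist u & forall i, has_var i u -> has_var i t].
Proof.
elim: t k u => [j|g a IHa c IHc] [|k] u //=.
  by move=> _ _ [<-].
move=> /andP [/andP [Hg Ha] Hc] /and3P [Da Dc /forallP Dj].
have Hodf : forall (v : tree n) k', allt g0 v -> dist v ->
  (forall u, del_at v k' = Some u -> [/\ allt g0 u, dist u & forall i, has_var i u -> has_var i v]) ->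
  [/\ allt g0 (odflt v (del_at v k')), dist (odflt v (del_at v k')) &
     forall i, has_var i (odflt v (del_at v k')) -> has_var i v].
  by move=> v k' Hv Dv IH; case E: (del_at v k') => [w|] /=; [exact: IH | split].
case: eqP => [_ [<-]|_]; first by split => // i ->; rewrite orbT.
case: eqP => [_ [<-]|_]; first by split => // i ->.
case: ifP => _ [<-].
  have [H1 H2 H3] := Hodf a k Ha Da (fun u => IHa k u Ha Da); split => /=; first by rewrite Hg H1 Hc.
    rewrite H2 Dc /=; apply/forallP => i; apply/negP => /andP [/H3 Hi Hi'].
    by move: (Dj i); rewrite Hi Hi'.
  by move=> i /orP [/H3 ->|->]; rewrite ?orbT.
have [H1 H2 H3] := Hodf c (k - tsize a) Hc Dc (fun u => IHc _ u Hc Dc); split => /=; first by rewrite Hg H1 Ha.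
  rewrite H2 Da /=; apply/forallP => i; apply/negP => /andP [Hi /H3 Hi'].
  by move: (Dj i); rewrite Hi Hi'.
by move=> i /orP [->|/H3 ->]; rewrite ?orbT.
Qed.

Fixpoint leaf_at t (j : nat) : 'I_n :=
  match t with Leaf i => i
  | Node _ a c => if (j < nleaves a)%N then leaf_at a j else leaf_at c (j - nleaves a) end.

Lemma leaf_at_in t j : has_var (leaf_at t j) t.
Proof.
elim: t j => [i|g a IHa c IHc] j /=; first by [].
by case: ifP => _; rewrite ?IHa ?IHc ?orbT.
Qed.

Lemma sub_allt g0 l t j : allt g0 t -> allt g0 (sub_leaf l t j).
Proof.
elim: t j => [i|g a IHa c IHc] j //= /andP [/andP [Hg Ha] Hc].
by case: ifP => _ /=; rewrite Hg ?IHa ?IHc ?Ha ?Hc.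
Qed.

Lemma sub_vars l t j i : dist t ->
  has_var i (sub_leaf l t j) = (i == l) || (has_var i t && (i != leaf_at t j)).
Proof.
elim: t j => [i0|g a IHa c IHc] j /=.
  by move=> _; rewrite eq_sym; case: (i0 =P i) => [->|]; rewrite ?eqxx ?orbF.
move=> /and3P [Da Dc /forallP Dj]; case: ifP => _ /=.
  rewrite IHa //; case Hic: (has_var i c); rewrite ?orbT ?orbF //=.
  suff -> : i != leaf_at a j by rewrite !orbT.
  by apply/eqP => E; move: (Dj i); rewrite Hic E leaf_at_in.
rewrite IHc //; case Hia: (has_var i a); rewrite ?orbT ?orbF //=.
suff -> : i != leaf_at c (j - nleaves a) by rewrite orbT.
by apply/eqP => E; move: (Dj i); rewrite Hia E leaf_at_in.
Qed.

Lemma sub_dist l t j : dist t -> (~~ has_var l t || (l == leaf_at t j)) ->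
  dist (sub_leaf l t j).
Proof.
elim: t j => [i0|g a IHa c IHc] j //=.
move=> /and3P [Da Dc /forallP Dj]; case: ifP => _ /= Hl.
  rewrite IHa ?Dc /=.
  - apply/forallP => i; rewrite sub_vars //; apply/negP => /andP [/orP [/eqP Eil|/andP [Hia _]] Hic].
    + move: Hl; rewrite negb_or -Eil Hic andbF /= => /eqP E.
      by move: (Dj i); rewrite Hic E leaf_at_in.
    + by move: (Dj i); rewrite Hia Hic.
  - by [].
  - by move: Hl; rewrite negb_or => /orP [/andP [-> _]|->]; rewrite ?orbT.
rewrite IHc ?Da /=.
- apply/forallP => i; rewrite sub_vars //; apply/negP => /andP [Hia /orP [/eqP Eil|/andP [Hic _]]].
  + move: Hl; rewrite negb_or -Eil Hia /= => /eqP E.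
    by move: (Dj i); rewrite Hia E leaf_at_in.
  + by move: (Dj i); rewrite Hia Hic.
- by [].
- by move: Hl; rewrite negb_or => /orP [/andP [_ ->]|->]; rewrite ?orbT.
Qed.

End DelSub.
Section Cube.
Variable n : nat.
Definition cube (A : {set 'I_n}) (a : 'I_n -> bool) : {set input n} :=
  [set x : input n | [forall i, (i \in A) ==> (x i == a i)]].

Lemma card_cube A a : #|cube A a| = 2 ^ (n - #|A|).
Proof.
pose F := fun i : 'I_n => (if i \in A then pred1 (a i) else predT) : pred bool.
have -> : #|cube A a| = #|(family F : simpl_pred {dffun forall x : 'I_n, bool})|.
  apply: eq_card => x; rewrite inE; apply/forallP/familyP => H i; move: (H i); rewrite /F;
  by case: (i \in A) => //= /eqP.
rewrite card_family.
have -> : foldr muln 1 [seq #|F x| | x : 'I_n] = \prod_(x : 'I_n) #|F x|.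
  by rewrite /image_mem foldrE big_map big_enum.
rewrite (bigID (fun i => i \in A)) /= (eq_bigr (fun _ => 1)); last first.
  by move=> i Hi; rewrite /F Hi card1.
rewrite big1_eq mul1n (eq_bigr (fun _ => 2)); last first.
  by move=> i /negbTE Hi; rewrite /F Hi card_bool.
rewrite prod_nat_const; congr (_ ^ _).
have H := cardsC A; rewrite card_ord in H.
have -> : #|[pred i | i \notin A]| = #|~: A| by apply: eq_card => i; rewrite !inE.
by rewrite -[X in X - _]H addKn.
Qed.
End Cube.

Section Err.
Variables (n : nat) (tgt : fn).
Implicit Types (t u : tree n) (x : input n).
Local Notation bt := (tgt == AND).

Definition vars t : {set 'I_n} := [set i | has_var i t].
Definition Eset (X : program n) : {set input n} :=
  if X is Some t then [set x | eval t x != target tgt x] else setT.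
Definition good (X : program n) : bool :=
  if X is Some t then allt tgt t && dist t else true.
Definition aw (w : 'I_n) : 'I_n -> bool := fun i => if i == w then ~~ bt else bt.

Lemma target_b x : (target tgt x == bt) = [forall i, x i == bt].
Proof.
case: tgt => /=.
  by apply/eqP/forallP => [/forallP H i|H]; [rewrite H | apply/forallP => i; apply/eqP/H].
apply/eqP/forallP => [H i|H]; first by have /existsPn := negbT H; move/(_ i); rewrite eqbF_neg.
by apply/negbTE/existsPn => i; rewrite -eqbF_neg H.
Qed.

Lemma inEset t x : (x \in Eset (Some t)) = (eval t x == bt) && ~~ [forall i, x i == bt].
Proof.
rewrite inE; case: (boolP [forall i, x i == bt]) => [H|H] /=.
  have Et : target tgt x = bt by apply/eqP; rewrite target_b.
  have Ee : eval t x = bt.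
    by apply: eval_vars_const => i _; apply/eqP; move/forallP: H.
  by rewrite Et Ee eqxx.
have : (target tgt x == bt) = false by rewrite target_b (negbTE H).
rewrite andbT; move: (target tgt x) (eval t x) bt => [] [] []; by [].
Qed.

Lemma inEset_good t x : allt tgt t ->
  (x \in Eset (Some t)) = [forall i, has_var i t ==> (x i == bt)] && ~~ [forall i, x i == bt].
Proof.
move=> Ht; rewrite inEset; congr (_ && _).
apply/eqP/forallP => [H i|H]; first by apply/implyP => Hi; apply/eqP; move: i Hi; apply/eval_allt.
by apply/eval_allt => // i Hi; apply/eqP; move: (H i); rewrite Hi.
Qed.

Lemma card_Eset_good t : allt tgt t -> #|Eset (Some t)| = (2 ^ (n - #|vars t|)).-1.
Proof.
move=> Ht; rewrite -(card_cube _ (fun _ => bt)).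
have -> : Eset (Some t) = cube (vars t) (fun _ => bt) :\ [ffun => bt].
  apply/setP => x; rewrite inEset_good // !inE andbC; congr (_ && _).
    congr (~~ _); apply/forallP/eqP => [H|-> i]; last by rewrite ffunE.
    by apply/ffunP => i; rewrite ffunE; apply/eqP/H.
  by apply/forallP/forallP => H i; move: (H i); rewrite inE.
rewrite (cardsD1 [ffun => bt] (cube _ _)).
have -> : [ffun => bt] \in cube (vars t) (fun _ => bt).
  by rewrite inE; apply/forallP => i; rewrite ffunE eqxx implybT.
by [].
Qed.

Lemma card_Eset_le X : #|Eset X| <= 2 ^ n.
Proof.
have -> : (2 ^ n = #|input n|)%N by rewrite card_ffun card_bool card_ord.
exact: max_card.
Qed.

Lemma card_EsetNone : #|Eset None| = 2 ^ n.
Proof. by rewrite /= cardsT card_ffun card_bool card_ord. Qed.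

Lemma cube_disj t w x : allt tgt t -> has_var w t -> x \in cube (vars t) (aw w) ->
  x \notin Eset (Some t).
Proof.
move=> Ht Hw; rewrite inE inEset_good // => /forallP H; apply/negP => /andP [/forallP H1 _].
move: (H1 w) (H w); rewrite Hw inE Hw /aw eqxx /= => /eqP ->.
by case: bt.
Qed.

Lemma cube_notconst t w x : has_var w t -> x \in cube (vars t) (aw w) -> ~~ [forall i, x i == bt].
Proof.
move=> Hw; rewrite inE => /forallP H; apply/negP => /forallP H1.
by move: (H w) (H1 w); rewrite inE Hw /aw eqxx /= => /eqP ->; case: bt.
Qed.

Lemma B_sub t u w : allt tgt t -> allt tgt u -> (forall i, has_var i u -> has_var i t) ->
  has_var w t -> ~~ has_var w u ->
  Eset (Some t) \subset Eset (Some u) /\ cube (vars t) (aw w) \subset Eset (Some u).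
Proof.
move=> Ht Hu Hut Hw Nw; split; apply/subsetP => x.
  rewrite !inEset_good // => /andP [/forallP H ->]; rewrite andbT.
  by apply/forallP => i; apply/implyP => /Hut Hi; move: (H i); rewrite Hi.
move=> Hx; rewrite inEset_good // (cube_notconst Hw Hx) andbT.
move: Hx; rewrite inE => /forallP H; apply/forallP => i; apply/implyP => Hi.
move: (H i); rewrite inE (Hut _ Hi) /= /aw; case: (i =P w) => [E|_ //].
by move: Nw; rewrite -E Hi.
Qed.

End Err.

Section Avg.
Variable R : realType.
Local Open Scope ring_scope.

Lemma eq_avg (T : finType) (F G : T -> R) : (forall x, F x = G x) -> avg F = avg G.
Proof. by move=> H; rewrite /avg (eq_bigr _ (fun x _ => H x)). Qed.

Lemma ler_avg (T : finType) (F G : T -> R) : (forall x, F x <= G x) -> avg F <= avg G.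
Proof. by move=> H; rewrite /avg ler_wpM2r ?invr_ge0 ?ler0n // ler_sum. Qed.

Lemma avg_ge0 (T : finType) (F : T -> R) : (forall x, 0 <= F x) -> 0 <= avg F.
Proof. by move=> H; rewrite /avg mulr_ge0 ?invr_ge0 ?ler0n ?sumr_ge0. Qed.

Lemma avg_cst (T : finType) (c : R) : (0 < #|T|)%N -> avg (fun _ : T => c) = c.
Proof.
move=> H; rewrite /avg sumr_const -[c *+ _]mulr_natr mulfK //.
by rewrite pnatr_eq0 -lt0n.
Qed.

Lemma avg_le_cst (T : finType) (F : T -> R) c : 0 <= c -> (forall x, F x <= c) -> avg F <= c.
Proof.
move=> c0 H; case: (posnP #|T|) => HT.
  by rewrite /avg HT invr0 mulr0.
by rewrite -(avg_cst c HT); apply: ler_avg.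
Qed.

Lemma avgD (T : finType) (F G : T -> R) : avg (fun x => F x + G x) = avg F + avg G.
Proof. by rewrite /avg big_split mulrDl. Qed.

Lemma avgMr (T : finType) (F : T -> R) k : avg (fun x => F x * k) = avg F * k.
Proof. by rewrite /avg -mulr_suml mulrAC. Qed.

Lemma avg_xchg (A B : finType) (F : A -> B -> R) :
  avg (fun a => avg (fun b => F a b)) = avg (fun b => avg (fun a => F a b)).
Proof.
rewrite /avg -!mulr_suml; rewrite (exchange_big _ _ _ _ _ (fun a b => F a b)).
by rewrite -!mulrA [_^-1 * _]mulrC.
Qed.

Lemma avg_ind (T : finType) (P : pred T) :
  avg (fun x => if P x then 1 else 0 : R) = #|[set x | P x]|%:R / #|T|%:R.
Proof.
congr (_ / _); rewrite -sum1_card natr_sum [RHS]big_mkcond /=.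
by apply: eq_bigr => x _; rewrite inE.
Qed.

Lemma avg_fn_le_cst (F : fn -> R) c : (forall g, F g <= c) -> avg_fn F <= c.
Proof.
move=> H; rewrite /avg_fn ler_pdivrMr ?ltr0n // mulr_natr mulr2n.
by apply: lerD.
Qed.

Lemma avg_fn_ge0 (F : fn -> R) : (forall g, 0 <= F g) -> 0 <= avg_fn F.
Proof. by move=> H; rewrite /avg_fn divr_ge0 ?addr_ge0. Qed.

Lemma avg_xchg_le (A T : finType) (H : A -> T -> R) (B : A -> R) :
  (forall a, avg (fun S => H a S) <= B a) ->
  avg (fun S => avg (fun a => H a S)) <= avg B.
Proof. by move=> HB; rewrite avg_xchg; apply: ler_avg. Qed.

Lemma avg_fn_xchg_le (T : finType) (H : fn -> T -> R) c :
  (forall g, avg (fun S => H g S) <= c) ->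
  avg (fun S => avg_fn (fun g => H g S)) <= c.
Proof.
move=> HB; rewrite /avg_fn.
have -> : avg (fun S => (H AND S + H OR S) / 2) = (avg (H AND) + avg (H OR)) / 2.
  by rewrite avgMr avgD.
rewrite ler_pdivrMr ?ltr0n // mulr_natr mulr2n; exact: lerD.
Qed.

Lemma avg_xchg_le_cst (A T : finType) (H : A -> T -> R) c : 0 <= c ->
  (forall a, avg (fun S => H a S) <= c) ->
  avg (fun S => avg (fun a => H a S)) <= c.
Proof.
move=> c0 HB; rewrite avg_xchg; exact: avg_le_cst.
Qed.

Lemma prob_avoid (n s : nat) (C : {set input n}) :
  avg (fun S : {ffun 'I_s -> input n} => if [forall i, S i \notin C] then 1 else 0 : R)
  = ((2 ^ n - #|C|)%:R / (2 ^ n)%:R) ^+ s.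
Proof.
rewrite avg_ind.
have -> : #|[set S : {ffun 'I_s -> input n} | [forall i, S i \notin C]]| = (#|~: C| ^ s)%N.
  rewrite -[in RHS](card_ord s) -card_ffun_on; apply: eq_card => S; rewrite inE.
  apply/forallP/ffun_onP => H i; move: (H i); by rewrite inE.
rewrite card_ffun card_ord card_ffun card_bool card_ord expr_div_n -!natrX.
congr (_ / _); congr (_%:R); congr (expn _ _); have := cardsC C; rewrite card_ffun card_bool card_ord; lia.
Qed.

End Avg.

Section Proc.
Variables (R : realType) (n ell : nat) (tgt : fn) (s : nat) (c' : R).
Local Open Scope ring_scope.
Local Notation pb := (pbad n ell tgt s c').
Local Notation gen := (gen_err R tgt).
Local Notation samp := (samp_err tgt).
Local Notation bt := (tgt == AND).
Local Notation E := (Eset tgt).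
Implicit Types (t u : tree n) (X : program n).

Definition Fpb T (S : {ffun 'I_s -> input n}) X X' (flag : bool) : R :=
  if (LeafCount X' <= ell)%N && (samp S X' <= samp S X)%N then
    (if flag || (gen X < gen X') then 1 else pb T X') else pb T X.

Lemma pbad_S T X : pb T.+1 X =
  if s%:R * gen X <= c' / 4 * lg (n%:R : R) then 0 else
  avg (fun S : {ffun 'I_s -> input n} =>
    if ((samp S X)%:R : R) <= c' * lg (n%:R : R) then 0 else mut_exp tgt (Fpb T S X) X).
Proof. by []. Qed.

Lemma mut_exp_le (F : program n -> bool -> R) X c : 0 <= c -> (forall X' f, F X' f <= c) -> mut_exp tgt F X <= c.
Proof.
move=> c0 H; case: X => [t|] /=; last by apply: avg_le_cst.
have h1 : avg (fun l : 'I_n => avg_fn (fun g => avg (fun k : 'I_(tsize t) => avg (fun b : bool =>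
           F (Some (mod_at (fun u => if b then Node g u (Leaf l) else Node g (Leaf l) u) t k))
             (has_var l t || undesired tgt g))))) <= c.
  apply: avg_le_cst => // l; apply: avg_fn_le_cst => g; apply: avg_le_cst => // k.
  by apply: avg_le_cst.
have h2 : avg (fun k : 'I_(tsize t) => F (del_at t k) false) <= c by apply: avg_le_cst.
have h3 : avg (fun l : 'I_n => avg (fun j : 'I_(nleaves t) => F (Some (sub_leaf l t j)) false)) <= c.
  by apply: avg_le_cst => // l; apply: avg_le_cst.
rewrite ler_pdivrMr ?ltr0n //; lra.
Qed.

Lemma mut_exp_ge0 (F : program n -> bool -> R) X : (forall X' f, 0 <= F X' f) -> 0 <= mut_exp tgt F X.
Proof.
move=> H; case: X => [t|] /=; last by apply: avg_ge0.
rewrite divr_ge0 // !addr_ge0 //.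
- apply: avg_ge0 => l; apply: avg_fn_ge0 => g; apply: avg_ge0 => k; exact: avg_ge0.
- exact: avg_ge0.
- by apply: avg_ge0 => l; apply: avg_ge0.
Qed.

Lemma pbad01 T X : 0 <= pb T X <= 1.
Proof.
elim: T X => [|T IH] X; first by rewrite /= lexx ler01.
rewrite pbad_S; case: ifP => _; first by rewrite lexx ler01.
apply/andP; split.
  apply: avg_ge0 => S; case: ifP => _ //; apply: mut_exp_ge0 => X' f; rewrite /Fpb.
  by case: ifP => _; [case: ifP => _ //; case/andP: (IH X') | case/andP: (IH X)].
apply: avg_le_cst => // S; case: ifP => _ //; apply: mut_exp_le => // X' f; rewrite /Fpb.
by case: ifP => _; [case: ifP => _ //; case/andP: (IH X') | case/andP: (IH X)].
Qed.

Lemma samp_errE (S : {ffun 'I_s -> input n}) X : samp S X = #|[set i | S i \in E X]|.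
Proof.
case: X => [t|] /=; first by apply: eq_card => i; rewrite !inE.
by rewrite -[LHS](card_ord s); apply: eq_card => i; rewrite !inE.
Qed.

Lemma gen_errE X : gen X = #|E X|%:R / (2 ^ n)%:R.
Proof.
case: X => [t|] //; rewrite (@card_EsetNone n tgt) divff // pnatr_eq0 expn_eq0.
by []. Qed.

Lemma gen_le1 X : gen X <= 1.
Proof.
rewrite gen_errE ler_pdivrMr ?ltr0n ?expn_gt0 // mul1r ler_nat; exact: card_Eset_le.
Qed.

Lemma gen_mono t u : allt tgt t -> allt tgt u -> (#|vars t| <= #|vars u|)%N ->
  gen (Some u) <= gen (Some t).
Proof.
move=> Ht Hu H; rewrite !gen_errE ler_pM2r ?invr_gt0 ?ltr0n ?expn_gt0 //.
rewrite ler_nat !card_Eset_good // -!subn1 leq_sub2r // leq_pexp2l //.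
exact: leq_sub2l.
Qed.

Lemma O_A T e S X X' : good tgt X -> good tgt X' -> gen X' <= gen X ->
  (forall Y, good tgt Y -> pb T Y <= e) -> Fpb T S X X' false <= e.
Proof.
move=> GX GX' Hg IH; rewrite /Fpb; case: ifP => _; last exact: IH.
by rewrite /= ltNge Hg /=; apply: IH.
Qed.

Lemma O_1 T e S X X' f : pb T X <= e -> 0 <= e -> Fpb T S X X' f <= 1 + e.
Proof.
move=> H e0; rewrite /Fpb; case: ifP => _.
  case: ifP => _; first by rewrite lerDl.
  by case/andP: (pbad01 T X') => _ H1; apply: le_trans H1 _; rewrite lerDl.
by apply: le_trans H _; rewrite lerDr.
Qed.

Lemma samp_le_avoid (S : {ffun 'I_s -> input n}) (A B C : {set input n}) :
  A \subset B -> C \subset B -> [disjoint C & A] ->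
  (#|[set i | S i \in B]| <= #|[set i | S i \in A]|)%N -> [forall i, S i \notin C].
Proof.
move=> AB CB CA Hle.
have sub : [set i | S i \in A] \subset [set i | S i \in B].
  by apply/subsetP => i; rewrite !inE => /(subsetP AB).
have /eqP EAB : [set i | S i \in A] == [set i | S i \in B].
  by rewrite eqEcard sub Hle.
apply/forallP => i; apply/negP => HC.
have : i \in [set i | S i \in B] by rewrite inE (subsetP CB).
rewrite -EAB inE => HA.
by move: CA; rewrite disjoint_subset => /subsetP /(_ _ HC); rewrite inE HA.
Qed.

Lemma O_B T e X X' f (C : {set input n}) : pb T X <= e -> 0 <= e ->
  E X \subset E X' -> C \subset E X' -> [disjoint C & E X] ->
  avg (fun S => Fpb T S X X' f) <= ((2 ^ n - #|C|)%:R / (2 ^ n)%:R) ^+ s + e.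
Proof.
move=> H e0 s1 s2 s3; rewrite -prob_avoid.
have -> : avg (fun S : {ffun 'I_s -> input n} => ((if [forall i, S i \notin C] then 1 else 0) : R)) + e
  = avg (fun S : {ffun 'I_s -> input n} => ((if [forall i, S i \notin C] then 1 else 0) : R) + e).
  by rewrite avgD avg_cst // card_ffun card_ffun card_bool expn_gt0 expn_gt0.
apply: ler_avg => S; rewrite /Fpb; case: ifP => [/andP [_ Hs]|_].
  rewrite !samp_errE in Hs; rewrite (samp_le_avoid s1 s2 s3 Hs).
  case: ifP => _ //; first by rewrite lerDl.
  by case/andP: (pbad01 T X') => _ H1; apply: le_trans H1 _; rewrite lerDl.
apply: le_trans H _; rewrite lerDr; by case: ifP.
Qed.


Definition p0 (d : nat) : R := (1 - ((2 ^ d.+1)%N%:R)^-1) ^+ s.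

Lemma p0_ge0 d : 0 <= p0 d.
Proof.
rewrite /p0 exprn_ge0 // subr_ge0 invf_le1 ?ltr0n ?expn_gt0 //.
by rewrite (ler_nat R 1) expn_gt0.
Qed.

Lemma ratio_le (C : {set input n}) k d : #|C| = (2 ^ (n - k))%N -> (k <= n)%N -> (k <= d.+1)%N ->
  ((2 ^ n - #|C|)%:R / (2 ^ n)%:R) ^+ s <= p0 d.
Proof.
move=> HC Hkn Hkd; rewrite HC.
have e2 : (2 ^ n = 2 ^ (n - k) * 2 ^ k)%N by rewrite -expnD subnK.
have a0 : (0 < 2 ^ (n - k))%N by rewrite expn_gt0.
have b0 : (0 < 2 ^ k)%N by rewrite expn_gt0.
have -> : (2 ^ n - 2 ^ (n - k))%:R / (2 ^ n)%:R = 1 - ((2 ^ k)%N%:R)^-1 :> R.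
  rewrite e2 natrB; last by rewrite leq_pmulr.
  rewrite natrM; field.
  by apply/andP; split; rewrite pnatr_eq0 -lt0n.
rewrite /p0 lerXn2r ?nnegrE //.
- by rewrite subr_ge0 invf_le1 ?ltr0n // (ler_nat R 1).
- by rewrite subr_ge0 invf_le1 ?ltr0n ?expn_gt0 // (ler_nat R 1) expn_gt0.
- by rewrite lerD2l lerN2 lef_pV2 ?posrE ?ltr0n ?expn_gt0 // ler_nat leq_pexp2l.
Qed.

Lemma cube_val (A : {set 'I_n}) w (x : input n) i : x \in cube A (@aw n tgt w) -> i \in A -> x i = aw tgt w i.
Proof. by rewrite inE => /forallP /(_ i) /implyP H /H /eqP. Qed.

Lemma cube_nc (A : {set 'I_n}) w (x : input n) : w \in A -> x \in cube A (@aw n tgt w) -> ~~ [forall i, x i == bt].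
Proof.
move=> Hw Hx; apply/negP => /forallP /(_ w); rewrite (cube_val Hx Hw) /aw eqxx.
by case: (tgt == AND).
Qed.

Lemma cube_disj' t (A : {set 'I_n}) w : allt tgt t -> has_var w t -> w \in A ->
  [disjoint cube A (@aw n tgt w) & E (Some t)].
Proof.
move=> Ht Hw HwA; rewrite disjoint_subset; apply/subsetP => x Hx; rewrite inE inEset.
apply/negP => /andP [/eqP Hb _]; have := (proj1 (eval_allt x Ht) Hb w Hw).
by rewrite (cube_val Hx HwA) /aw eqxx; case: (tgt == AND).
Qed.

Lemma B_out T e t X' f (A : {set 'I_n}) w : good tgt (Some t) -> 0 <= e -> pb T (Some t) <= e ->
  has_var w t -> w \in A -> (#|A| <= #|vars t|.+1)%N ->
  E (Some t) \subset E X' -> cube A (@aw n tgt w) \subset E X' ->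
  avg (fun S => Fpb T S (Some t) X' f) <= p0 #|vars t| + e.
Proof.
move=> /andP [Ht Dt] e0 He Hw HwA HA s1 s2.
apply: le_trans (O_B f He e0 s1 s2 (cube_disj' Ht Hw HwA)) _.
rewrite lerD2r; apply: ratio_le HA; first exact: card_cube.
by have := max_card (mem A); rewrite card_ord.
Qed.

Lemma A_out T e X X' : good tgt X -> good tgt X' -> gen X' <= gen X -> 0 <= e ->
  (forall Y, good tgt Y -> pb T Y <= e) ->
  avg (fun S => Fpb T S X X' false) <= e.
Proof. by move=> G G' Hg e0 IH; apply: avg_le_cst => // S; apply: O_A. Qed.


Lemma absorb g p : g != tgt -> opf g bt p = bt /\ opf g p bt = bt.
Proof. by case: g; case: tgt => //= _; case: p. Qed.

Section FI.
Variables (bb : bool) (g : fn) (l : 'I_n).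
Definition fI (u : tree n) := if bb then Node g u (Leaf l) else Node g (Leaf l) u.
Lemma fI_vars u i : has_var i (fI u) = has_var i u || (i == l).
Proof. by rewrite /fI; case: bb => /=; rewrite eq_sym // orbC. Qed.
Lemma fI_allt u : g = tgt -> allt tgt u -> allt tgt (fI u).
Proof. by move=> Eg Hu; rewrite /fI; case: bb; rewrite /= Eg eqxx Hu. Qed.
Lemma fI_dist u : dist u -> ~~ has_var l u -> dist (fI u).
Proof.
move=> Du Nu; rewrite /fI; case: bb => /=; rewrite Du /= ?andbT;
apply/forallP => i; apply/negP.
  by move=> /andP [H1 /eqP E1]; move: Nu; rewrite E1 H1.
by move=> /andP [/eqP E1 H2]; move: Nu; rewrite E1 H2.
Qed.
Lemma fI_eval u x : g != tgt -> (eval u x = bt \/ x l = bt) -> eval (fI u) x = bt.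
Proof.
move=> Ng [H|H]; rewrite /fI; case: bb; rewrite eval_Node /= H.
- by case: (absorb (x l) Ng).
- by case: (absorb (x l) Ng).
- by case: (absorb (eval u x) Ng).
- by case: (absorb (eval u x) Ng).
Qed.
End FI.

Lemma ins_out T e t l g k (bb : bool) : good tgt (Some t) -> 0 <= e ->
  (forall Y, good tgt Y -> pb T Y <= e) -> (k < tsize t)%N ->
  avg (fun S => Fpb T S (Some t)
     (Some (mod_at (fun u => if bb then Node g u (Leaf l) else Node g (Leaf l) u) t k))
     (has_var l t || undesired tgt g))
  <= (if has_var l t then 1 else p0 #|vars t|) + e.
Proof.
move=> Gt e0 IH Hk; have He := IH _ Gt.
case Hl: (has_var l t).
  by apply: avg_le_cst => [|S]; [rewrite addr_ge0 | apply: O_1].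
rewrite -/(fI bb g l).
have fv := fI_vars bb g l.
move/andP: (Gt) => [Ht Dt].
have Hsub : vars t \subset vars (mod_at (fI bb g l) t k).
  by apply/subsetP => i; rewrite !inE (mod_vars (fv^~ i)) // => ->.
case: (g =P tgt) => [Eg|/eqP Ng].
  have -> : undesired tgt g = false by rewrite Eg; clear; case: tgt.
  have Ha : allt tgt (mod_at (fI bb g l) t k).
    by apply: mod_allt => // u Hu; apply: fI_allt.
  apply: (@le_trans _ _ e); last by rewrite lerDr p0_ge0.
  apply: A_out => //.
  - rewrite /good Ha /=; apply: (mod_dist (l := l)) => //; last by rewrite Hl.
    exact: fI_dist.
  - by apply: gen_mono => //; exact: subset_leq_card.
have -> : undesired tgt g = true by move: Ng; clear; case: tgt; case: g.
have [w [Hw Hsep]] := ins_sep (fI bb g l) Dt Hk.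
have Hwl : w != l by apply/eqP => E1; move: Hl; rewrite -E1 Hw.
have Hfmono : forall x, eval t x = bt -> eval (mod_at (fI bb g l) t k) x = bt.
  by move=> x; apply: mod_mono => u Hu; apply: fI_eval => //; left.
apply: le_trans (@B_out T e t (Some (mod_at (fI bb g l) t k)) true (l |: vars t) w Gt e0 He Hw _ _ _ _) _ => //.
- by rewrite !inE Hw orbT.
- by rewrite cardsU1; case: (_ \notin _).
- by apply/subsetP => x; rewrite !inEset => /andP [/eqP Hb Hnc]; rewrite (Hfmono _ Hb) eqxx Hnc.
- apply/subsetP => x Hx; rewrite inEset (cube_nc _ Hx) ?andbT; last by rewrite !inE Hw orbT.
  apply/eqP; apply: Hsep => [i Hi Hiw|u].
    by rewrite (cube_val Hx) /aw ?(negbTE Hiw) // !inE Hi orbT.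
  apply: fI_eval => //; right.
  by rewrite (cube_val Hx) /aw ?(eq_sym l) ?(negbTE Hwl) // !inE eqxx.
Qed.

Lemma del_out T e t k : good tgt (Some t) -> 0 <= e ->
  (forall Y, good tgt Y -> pb T Y <= e) ->
  avg (fun S => Fpb T S (Some t) (del_at t k) false) <= p0 #|vars t| + e.
Proof.
move=> Gt e0 IH; have He := IH _ Gt; move/andP: (Gt) => [Ht Dt].
case Ed: (del_at t k) => [u|].
  have [Hu Du Huv] := del_good Ht Dt Ed.
  case: (boolP [forall i, has_var i t ==> has_var i u]) => [/forallP Hall|Hnall].
    apply: (@le_trans _ _ e); last by rewrite lerDr p0_ge0.
    apply: A_out => //; first by rewrite /good Hu Du.
    apply: gen_mono => //; apply: subset_leq_card; apply/subsetP => i.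
    by rewrite !inE => /(implyP (Hall i)).
  move: Hnall; rewrite negb_forall => /existsP [w]; rewrite negb_imply => /andP [Hw Nw].
  have [s1 s2] := B_sub Ht Hu Huv Hw Nw.
  by apply: (@B_out T e t (Some u) false (vars t) w) => //; rewrite inE.
have [w Hw] := has_var_ex t.
apply: (@B_out T e t None false (vars t) w) => //; first by rewrite inE.
- exact: subsetT.
- exact: subsetT.
Qed.

Lemma sub_out T e t l j : good tgt (Some t) -> 0 <= e ->
  (forall Y, good tgt Y -> pb T Y <= e) ->
  avg (fun S => Fpb T S (Some t) (Some (sub_leaf l t j)) false) <= p0 #|vars t| + e.
Proof.
move=> Gt e0 IH; have He := IH _ Gt; move/andP: (Gt) => [Ht Dt].
set w := leaf_at t j; have Hw : has_var w t := leaf_at_in t j.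
have Hv := fun i => sub_vars l j i Dt.
have Hu : allt tgt (sub_leaf l t j) := sub_allt l j Ht.
case: (boolP (has_var l t && (l != w))) => [/andP [Hlt Hlw]|Hc].
  have Huv : forall i, has_var i (sub_leaf l t j) -> has_var i t.
    by move=> i; rewrite Hv -/w => /orP [/eqP ->|/andP [] //].
  have Nw : ~~ has_var w (sub_leaf l t j).
    by rewrite Hv -/w eqxx andbF orbF eq_sym.
  have [s1 s2] := B_sub Ht Hu Huv Hw Nw.
  by apply: (@B_out T e t _ false (vars t) w) => //; rewrite inE.
apply: (@le_trans _ _ e); last by rewrite lerDr p0_ge0.
have Hc' : ~~ has_var l t || (l == w) by move: Hc; rewrite negb_and negbK.
apply: A_out => //; first by rewrite /good Hu sub_dist.
apply: gen_mono => //.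
have -> : vars (sub_leaf l t j) = l |: (vars t :\ w).
  by apply/setP => i; rewrite !inE Hv -/w andbC.
rewrite cardsU1 (cardsD1 w (vars t)) inE Hw.
have -> : l \notin vars t :\ w.
  by rewrite !inE; case/orP: Hc' => [/negbTE ->|/eqP ->]; rewrite ?andbF ?eqxx.
by [].
Qed.

Lemma step_some T e t : good tgt (Some t) -> 0 <= e ->
  (forall Y, good tgt Y -> pb T Y <= e) ->
  avg (fun S => mut_exp tgt (Fpb T S (Some t)) (Some t))
  <= #|vars t|%:R / n%:R + p0 #|vars t| + e.
Proof.
move=> Gt e0 IH; set d := #|vars t|.
have [w0 _] := has_var_ex t.
have n0 : (0 < n)%N by case: w0 => m; case: n.
have pe0 : 0 <= p0 d + e by rewrite addr_ge0 ?p0_ge0.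
rewrite /mut_exp avgMr avgD avgD.
have hI : avg (fun S : {ffun 'I_s -> input n} => avg (fun l : 'I_n => avg_fn (fun g =>
         avg (fun k : 'I_(tsize t) => avg (fun b : bool =>
           Fpb T S (Some t) (Some (mod_at (fun u => if b then Node g u (Leaf l) else Node g (Leaf l) u) t k))
             (has_var l t || undesired tgt g))))))
          <= d%:R / n%:R + p0 d + e.
  apply: le_trans (avg_xchg_le (B := fun l => (if has_var l t then 1 else p0 d) + e) _) _.
    move=> l; apply: avg_fn_xchg_le => g.
    apply: avg_xchg_le_cst => [|k]; first by rewrite addr_ge0 //; case: ifP => _; rewrite ?ler01 ?p0_ge0.
    apply: avg_xchg_le_cst => [|bb]; first by rewrite addr_ge0 //; case: ifP => _; rewrite ?ler01 ?p0_ge0.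
    exact: ins_out.
  rewrite avgD avg_cst ?card_ord // lerD2r.
  apply: le_trans (ler_avg (G := fun l => (if has_var l t then 1 else 0) + p0 d) _) _.
    by move=> l; case: ifP => _; rewrite ?add0r ?lerDl ?p0_ge0.
  rewrite avgD avg_cst ?card_ord // avg_ind card_ord.
  have -> : #|[set x | has_var x t]| = d by [].
  by [].
have hD : avg (fun S : {ffun 'I_s -> input n} =>
            avg (fun k : 'I_(tsize t) => Fpb T S (Some t) (del_at t k) false)) <= p0 d + e.
  by apply: avg_xchg_le_cst => // k; apply: del_out.
have hU : avg (fun S : {ffun 'I_s -> input n} => avg (fun l : 'I_n =>
            avg (fun j : 'I_(nleaves t) => Fpb T S (Some t) (Some (sub_leaf l t j)) false)))
          <= p0 d + e.
  apply: avg_xchg_le_cst => // l; apply: avg_xchg_le_cst => // j; exact: sub_out.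
have dn0 : 0 <= d%:R / n%:R :> R by rewrite divr_ge0 ?ler0n.
move: hI hD hU; rewrite /Fpb => hI hD hU.
lra.
Qed.

Lemma Fpb_ge0 T S X X' f : 0 <= Fpb T S X X' f.
Proof.
rewrite /Fpb; case: ifP => _; last by case/andP: (pbad01 T X).
by case: ifP => _ //; case/andP: (pbad01 T X').
Qed.

Lemma pbad_good e : 0 <= e ->
  (forall t, good tgt (Some t) -> ~~ (s%:R * gen (Some t) <= c' / 4 * lg (n%:R : R)) ->
     #|vars t|%:R / n%:R + p0 #|vars t| <= e) ->
  forall T X, good tgt X -> pb T X <= T%:R * e.
Proof.
move=> e0 Hstep; elim=> [|T IH] X GX; first by rewrite /= mul0r.
have Te0 : 0 <= T%:R * e by rewrite mulr_ge0.
have eS : T.+1%:R * e = T%:R * e + e :> R by rewrite -addn1 natrD mulrDl mul1r.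
rewrite pbad_S; case: ifP => Hc; first by rewrite mulr_ge0.
apply: le_trans (ler_avg (G := fun S => mut_exp tgt (Fpb T S X) X) _) _.
  by move=> S; case: ifP => _ //; apply: mut_exp_ge0 => X' f; apply: Fpb_ge0.
case: X GX Hc => [t|] GX Hc.
  apply: le_trans (step_some GX Te0 IH) _.
  have := Hstep t GX (negbT Hc); rewrite eS; lra.
rewrite eS; apply: (@le_trans _ _ (T%:R * e)); last by rewrite lerDl.
apply: avg_xchg_le_cst => // l; apply: A_out => //; exact: gen_le1.
Qed.
End Proc.

Section Asym.
Variable R : realType.
Local Open Scope ring_scope.

Lemma ln2_gt0 : 0 < ln (2 : R).
Proof. by apply: ln_gt0; rewrite ltr1n. Qed.

Lemma lg_ge1 (n : nat) : (2 <= n)%N -> 1 <= lg (n%:R : R).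
Proof.
move=> Hn; rewrite /lg ler_pdivlMr ?ln2_gt0 // mul1r ler_ln ?posrE ?ltr0n //.
  by rewrite ler_nat.
by move: Hn; case: n.
Qed.

Lemma powR_ge1 (n : nat) (c : R) : 0 <= c -> (1 <= n)%N -> 1 <= (n%:R : R) `^ c.
Proof.
move=> c0 Hn; rewrite /powR pnatr_eq0; case: eqP => [E|_]; first by move: Hn; rewrite E.
apply: le_trans (expR_ge1Dx _); rewrite lerDl mulr_ge0 // ln_ge0 //.
by rewrite (ler_nat R 1).
Qed.

Lemma train_size_le (c : R) (n : nat) : 0 < c -> (2 <= n)%N ->
  (train_size c n)%:R <= (n%:R : R) `^ c * lg (n%:R : R) ^+ 2 + 1.
Proof.
move=> c0 Hn; rewrite /train_size; set y := _ * _.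
have y0 : 0 <= y by rewrite mulr_ge0 ?powR_ge0 // sqr_ge0.
have hc : (0 <= Num.ceil y)%R by rewrite ceil_ge0 (lt_le_trans _ y0) // ltrN10.
rewrite natr_absz ger0_norm //.
have := ceil_itv y; case/andP => H _.
move: H; rewrite rmorphB /= => H; lra.
Qed.

Lemma asym (c c' : R) (n d : nat) : 0 < c -> 8 + 8 * ln 2 <= c' -> (2 <= n)%N ->
  c' / 4 * lg (n%:R : R) < (train_size c n)%:R / (2 ^ d)%N%:R ->
  d%:R / n%:R + (1 - ((2 ^ d.+1)%N%:R)^-1) ^+ (train_size c n)
  <= ((c + 2 / ln 2) * lg (n%:R : R) + 1) / n%:R.
Proof.
move=> c0 Hc' Hn H.
set s := train_size c n; set L := lg (n%:R : R).
have l2 := ln2_gt0; have L1 : 1 <= L := lg_ge1 Hn.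
have n0 : (0 : R) < n%:R by rewrite ltr0n (leq_trans _ Hn).
have lnn : ln (n%:R : R) = L * ln 2 by rewrite /L /lg mulfVK ?gt_eqF.
have P0 : (0 : R) < (2 ^ d)%N%:R by rewrite ltr0n expn_gt0.
set y := (n%:R : R) `^ c * L ^+ 2.
have y1 : 1 <= y.
  have Hp : 1 <= (n%:R : R) `^ c by apply: powR_ge1; [exact: ltW | exact: leq_trans Hn].
  rewrite /y expr2; nra.
have sy : s%:R <= y + 1 := train_size_le c0 Hn.
have H2 : (2 : R) < s%:R / (2 ^ d)%N%:R.
  apply: (le_lt_trans _ H); have : 2 <= c' / 4 by lra.
  move=> h; have := ler_pM (ler0n R 2) ler01 h L1; by rewrite mulr1.
have Hd : (2 ^ d)%N%:R < y.
  move: H2; rewrite ltr_pdivlMr // => H2; lra.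
have Hdl : d%:R * ln 2 < c * ln (n%:R) + 2 * L.
  have -> : d%:R * ln (2 : R) = ln ((2 ^ d)%N%:R) by rewrite natrX lnXn // mulr_natl.
  apply: lt_le_trans (_ : ln y <= _).
    by rewrite ltr_ln ?posrE // (lt_le_trans ltr01).
  have Lp : 0 < L by apply: lt_le_trans ltr01 L1.
  rewrite /y lnM ?posrE ?powR_gt0 ?exprn_gt0 // ln_powR lerD2l lnXn // mulr2n.
  have := ln_sublinear Lp; lra.
have HdD : d%:R <= (c + 2 / ln 2) * L.
  rewrite -(ler_pM2r l2).
  have -> : (c + 2 / ln 2) * L * ln 2 = c * (L * ln 2) + 2 * L by field; rewrite gt_eqF.
  rewrite -lnn; exact: ltW.
set a := ((2 ^ d.+1)%N%:R : R)^-1.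
have a0 : 0 <= a by rewrite invr_ge0 ler0n.
have a1 : a <= 1 by rewrite invf_le1 ?ltr0n ?expn_gt0 // (ler_nat R 1) expn_gt0.
have Hp : (1 - a) ^+ s <= expR (- (s%:R * a)).
  rewrite -mulrN expRM_natl lerXn2r ?nnegrE ?expR_ge0 ?subr_ge0 //.
  by rewrite addrC -[X in X <= _]addrC; exact: expR_ge1Dx.
have Hsa : ln (n%:R) <= s%:R * a.
  have -> : a = ((2 ^ d)%N%:R)^-1 / 2 by rewrite /a expnS natrM invfM mulrC.
  rewrite mulrA; have H3 : c' / 4 * L / 2 <= s%:R * ((2 ^ d)%N%:R)^-1 / 2.
    by rewrite ler_pM2r ?invr_gt0 ?ltr0n //; apply/ltW.
  apply: le_trans H3; rewrite lnn.
  have -> : c' / 4 * L / 2 = L * (c' / 8) by field.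
  rewrite ler_pM2l ?(lt_le_trans ltr01) //.
  have : 8 * ln (2 : R) <= c' by apply: le_trans _ Hc'; rewrite ?lerDl ?lerDr ?ler0n.
  by rewrite -ler_pdivlMl ?ltr0n // mulrC.
have Hp2 : expR (- (s%:R * a)) <= n%:R^-1.
  by rewrite -(lnK (x := n%:R)) ?posrE // -expRN ler_expR lerN2.
rewrite mulrDl lerD //; first by rewrite ler_pM2r ?invr_gt0.
by rewrite mul1r; apply: le_trans Hp Hp2.
Qed.
End Asym.

Section Final.
Variable R : realType.
Local Open Scope ring_scope.

Lemma gen_good_le (n : nat) (tgt : fn) (t : tree n) : allt tgt t ->
  gen_err R tgt (Some t) <= ((2 ^ #|vars t|)%N%:R)^-1.
Proof.
move=> Ht; rewrite gen_errE card_Eset_good //.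
have dn : (#|vars t| <= n)%N by have := max_card (mem (vars t)); rewrite card_ord.
have e2 : (2 ^ n = 2 ^ (n - #|vars t|) * 2 ^ #|vars t|)%N by rewrite -expnD subnK.
rewrite ler_pdivrMr ?ltr0n ?expn_gt0 // e2 natrM mulrC -mulrA mulfV ?pnatr_eq0 ?expn_eq0 // mulr1.
by rewrite ler_nat leq_pred.
Qed.

End Final.

Local Open Scope ring_scope.

Theorem lemma10 (R : realType) (c : R) :
  0 < c ->
  exists c0 : R, forall c' : R, c0 <= c' ->
  forall K : R, 0 < K ->
  exists C : R, exists N : nat,
  forall n : nat, (N <= n)%N ->
  forall ell : nat, (n <= ell)%N ->
  forall tgt : fn,
    pbad n ell tgt (train_size c n) c' (Num.truncn (K * lg n%:R)) None
      <= C * (lg n%:R) ^+ 2 / n%:R.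
Proof.
move=> c0; exists (8 + 8 * ln 2) => c' Hc' K K0.
have l2 := @ln2_gt0 R.
set D := c + 2 / ln 2.
have D0 : 0 <= D by apply: addr_ge0; [exact: ltW | rewrite divr_ge0 // ltW].
exists (K * (D + 1)), 2%N => n Hn ell _ tgt.
set s := train_size c n; set L := lg (n%:R : R).
have L1 : 1 <= L := @lg_ge1 R n Hn.
have n0 : (0 : R) < n%:R by rewrite ltr0n (leq_trans _ Hn).
set e := (D * L + 1) / n%:R.
have Lp : 0 <= L := le_trans ler01 L1.
have e0 : 0 <= e by apply: divr_ge0 (ltW n0); apply: addr_ge0 => //; apply: mulr_ge0.
apply: le_trans (@pbad_good R n ell tgt s c' e e0 _ (Num.truncn (K * L)) None isT) _.
  move=> t /andP [Ht _] Hc; apply: (@asym R c c' n #|vars t|) => //; rewrite -/s.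
  rewrite -ltNge in Hc; apply: lt_le_trans Hc _.
  by rewrite ler_wpM2l ?ler0n // gen_good_le.
have KL0 : 0 <= K * L by apply: mulr_ge0 => //; exact: ltW.
have HT : (Num.truncn (K * L))%:R <= K * L by rewrite truncn_le.
apply: le_trans (ler_wpM2r e0 HT) _.
have H1 : L * (D * L + 1) <= (D + 1) * L ^+ 2 by rewrite expr2; nra.
have -> : K * L * e = (K * (L * (D * L + 1))) / n%:R by rewrite /e !mulrA.
have -> : K * (D + 1) * L ^+ 2 / n%:R = (K * ((D + 1) * L ^+ 2)) / n%:R by rewrite !mulrA.
rewrite ler_wpM2r ?invr_ge0 ?ler0n // ler_wpM2l //; exact: ltW.
Qed.
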